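(* Let $k\ge 0$. For every $k$-essential multicontext $C$ there is a $k$-correct multicontext $C'$ equivalent to $C$.
   Context: Let $\Sigma$ be a finite alphabet, $1\notin\Sigma$ a separator, $\Sigma_1=\Sigma\cup\{1\}$, $\mathrm{rk}(w)=|w|_1$ for $w\in\Sigma_1^*$; for $\mathrm{rk}(u)\ge j$, $u\odot_j v$ replaces the $j$-th occurrence of $1$ in $u$ by $v$; these operations extend elementwise to sets of words. Let $N$ be a set of nonterminals, each with a rank in $\mathbb{N}$, and let there be countably many variables of each rank. Multicontexts (with ranks) are built from nonterminals and variables (their rank), words of $\Sigma^*$ (rank $0$) and $1$ (rank $1$) by $(\alpha\cdot\beta)$ of rank $\mathrm{rk}\alpha+\mathrm{rk}\beta$ and $(\alpha\odot_j\beta)$, $j\ge1$, allowed when $\mathrm{rk}\alpha\ge j$, of rank $\mathrm{rk}\alpha+\mathrm{rk}\beta-1$. Submulticontexts are the subterms (nodes of the syntactic tree). A multicontext is $k$-correct if every submulticontext has rank at most $k$; it is $k$-essential if its own rank and the ranks of all variables and nonterminals occurring in it are less than $k$. A multicontext is ground if it contains no nonterminals. Two ground multicontexts with variables $x_1,\dots,x_t$ are equivalent if for every valuation $\mu$ assigning to each variable of rank $r$ a set of words of $\Sigma_1^*$ of rank $r$, their values (interpreting $\cdot$ as concatenation and $\odot_j$ as intercalation, elementwise on sets) coincide. Two arbitrary multicontexts $\alpha_1,\alpha_2$ are equivalent if $\alpha_1=D_1[A_1,\dots,A_s]$ and $\alpha_2=D_2[A_1,\dots,A_s]$ for some nonterminals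 $A_1,\dots,A_s$ and some equivalent ground multicontexts $D_1,D_2$ (where $D[A_1,\dots,A_s]$ means substituting $A_i$ for the $i$-th of $s$ fresh variables). *)

(* Defs.v *)
From mathcomp Require Import all_boot.
Set Implicit Arguments.
Unset Strict Implicit.
Unset Printing Implicit Defensive.

(* Alphabet Sigma_1 = option S, with None playing the role of the separator 1. *)
Definition word (S : Type) := seq (option S).

Definition wrk (S : eqType) (w : word S) : nat := count_mem None w.

(* u (.)_j v : replace the j-th (j >= 1) occurrence of 1 in u by v *)
Fixpoint wins (S : Type) (j : nat) (u v : word S) : word S :=
  match u with
  | [::] => [::]
  | None :: u' => if j == 1 then v ++ u' else None :: wins j.-1 u' v
  | Some a :: u' => Some a :: wins j u' v
  end.

(* Variables are pairs (r, i): the i-th variable of rank r. *)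
Definition var := (nat * nat)%type.

Inductive mc (S N : Type) : Type :=
| MNt of N
| MVar of var
| MWord of seq S
| MOne
| MCat of mc S N & mc S N
| MIns of nat & mc S N & mc S N.   (* MIns j a b = (a (.)_j b) *)

Arguments MNt {S N}.
Arguments MVar {S N}.
Arguments MWord {S N}.
Arguments MOne {S N}.
Arguments MCat {S N}.
Arguments MIns {S N}.

Section MC.
Variables (S N : Type) (rkN : N -> nat).

Fixpoint mrk (t : mc S N) : nat :=
  match t with
  | MNt A => rkN A
  | MVar x => x.1
  | MWord _ => 0
  | MOne => 1
  | MCat a b => mrk a + mrk b
  | MIns _ a b => mrk a + mrk b - 1
  end.

Fixpoint mwf (t : mc S N) : Prop :=
  match t with
  | MCat a b => mwf a /\ mwf b
  | MIns j a b => 1 <= j /\ j <= mrk a /\ mwf a /\ mwf b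
  | _ => True
  end.

Fixpoint mcorrect (k : nat) (t : mc S N) : Prop :=
  mrk t <= k /\
  match t with
  | MCat a b => mcorrect k a /\ mcorrect k b
  | MIns _ a b => mcorrect k a /\ mcorrect k b
  | _ => True
  end.

Fixpoint leaves_lt (k : nat) (t : mc S N) : Prop :=
  match t with
  | MNt A => rkN A < k
  | MVar x => x.1 < k
  | MCat a b => leaves_lt k a /\ leaves_lt k b
  | MIns _ a b => leaves_lt k a /\ leaves_lt k b
  | _ => True
  end.

Definition messential (k : nat) (t : mc S N) : Prop :=
  mrk t < k /\ leaves_lt k t.

Fixpoint mground (t : mc S N) : Prop :=
  match t with
  | MNt _ => False
  | MCat a b => mground a /\ mground b
  | MIns _ a b => mground a /\ mground b
  | _ => True
  end.

Fixpoint msubst (sg : var -> option N) (t : mc S N) : mc S N :=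
  match t with
  | MVar x => match sg x with Some A => MNt A | None => MVar x end
  | MCat a b => MCat (msubst sg a) (msubst sg b)
  | MIns j a b => MIns j (msubst sg a) (msubst sg b)
  | t => t
  end.

Fixpoint meval (mu : var -> word S -> Prop) (t : mc S N) : word S -> Prop :=
  match t with
  | MNt _ => fun _ => False
  | MVar x => mu x
  | MWord w => fun u => u = map Some w
  | MOne => fun u => u = [:: None]
  | MCat a b => fun u => exists v w, meval mu a v /\ meval mu b w /\ u = v ++ w
  | MIns j a b => fun u => exists v w, meval mu a v /\ meval mu b w /\ u = wins j v w
  end.

End MC.

Definition valuation_ok (S : eqType) (mu : var -> word S -> Prop) : Prop :=
  forall x w, mu x w -> wrk w = x.1.

Definition gequiv (S : eqType) (N : Type) (D1 D2 : mc S N) : Prop :=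
  forall mu : var -> word S -> Prop, valuation_ok mu ->
    forall u, meval mu D1 u <-> meval mu D2 u.

(* equivalence of arbitrary multicontexts: a1 = D1[A..], a2 = D2[A..] where the
   substituted (fresh) variables are replaced by nonterminals of the same rank *)
Definition mequiv (S : eqType) (N : Type) (rkN : N -> nat) (a1 a2 : mc S N) : Prop :=
  exists (sg : var -> option N) (D1 D2 : mc S N),
    (forall x A, sg x = Some A -> x.1 = rkN A) /\
    mground D1 /\ mground D2 /\ mwf rkN D1 /\ mwf rkN D2 /\
    gequiv D1 D2 /\ a1 = msubst sg D1 /\ a2 = msubst sg D2.

(* Main.v *)
Require Import Defs.
From mathcomp Require Import all_boot zify.
Set Implicit Arguments. Unset Strict Implicit. Unset Printing Implicit Defensive.

Section Words.
Variable S : eqType.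
Implicit Types u v w x y z p q : word S.

Lemma wrk_cat u v : wrk (u ++ v) = wrk u + wrk v.
Proof. by rewrite /wrk count_cat. Qed.
Lemma wrk_None u : wrk (None :: u) = (wrk u).+1.
Proof. by rewrite /wrk /= add1n. Qed.
Lemma wrk_Some a u : wrk (Some a :: u) = wrk u.
Proof. by rewrite /wrk /=. Qed.
Lemma wrk_map (s : seq S) : wrk (map Some s) = 0.
Proof. by elim: s => //= a s IH; rewrite wrk_Some. Qed.

Lemma wins0 u v : wins 0 u v = u.
Proof. by elim: u => //= [[a|]] u ->. Qed.

Lemma wins_cat j u1 u2 v : wins j (u1 ++ u2) v =
  if j <= wrk u1 then wins j u1 v ++ u2 else u1 ++ wins (j - wrk u1) u2 v.
Proof.
elim: u1 j => [|[a|] u1 IH] j /=.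
- by case: j => [|j]; rewrite ?wins0.
- by rewrite add0n IH; case: ifP.
- rewrite add1n; case: j => [|[|j]] /=; rewrite ?wins0 //.
  + by rewrite catA.
  + by rewrite IH ltnS subSS; case: ifP.
Qed.

Lemma wsplit j u : 0 < j <= wrk u -> exists p q, u = p ++ None :: q /\ wrk p = j.-1.
Proof.
elim: u j => [|[a|] u IH] j.
- by rewrite /wrk /=; lia.
- rewrite wrk_Some => /IH [p [q [-> Hp]]]; exists (Some a :: p), q; by rewrite wrk_Some.
- rewrite wrk_None; case: j => [|[|j]] //= Hj.
  + by exists [::], u.
  + have /IH [p [q [-> Hp]]] : 0 < j.+1 <= wrk u by lia.
    by exists (None :: p), q; rewrite wrk_None Hp.
Qed.

Lemma wins_split p q v : wins (wrk p).+1 (p ++ None :: q) v = p ++ v ++ q.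
Proof. by rewrite wins_cat ltnn subSnn. Qed.

Lemma wrk_wins j u v : 0 < j <= wrk u -> wrk (wins j u v) = wrk u + wrk v - 1.
Proof.
move=> Hj; have [p [q [E Hp]]] := wsplit Hj; subst u.
have -> : j = (wrk p).+1 by rewrite wrk_cat wrk_None in Hj; lia.
rewrite wins_split !wrk_cat wrk_None; lia.
Qed.

Lemma W1 i j x y z : 0 < j -> j < i -> i <= wrk x -> wrk z = 0 ->
  wins i.-1 (wins j x z) y = wins j (wins i x y) z.
Proof.
move=> j0 ji ix z0; have /wsplit [p [q [-> Hp]]] : 0 < i <= wrk x by lia.
have -> : i = (wrk p).+1 by lia.
have L : j <= wrk p by lia.
rewrite wins_split (wins_cat j p (None :: q)) (wins_cat j p (y ++ q)) L.
have -> : (wrk p).+1.-1 = (wrk (wins j p z)).+1 by rewrite wrk_wins; lia.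
by rewrite wins_split.
Qed.

Lemma W2 i j x y z : 0 < i -> i <= j -> j < i + wrk y -> i <= wrk x -> wrk z = 0 ->
  wins i x (wins (j - i).+1 y z) = wins j (wins i x y) z.
Proof.
move=> i0 ij jy ix z0; have /wsplit [p [q [-> Hp]]] : 0 < i <= wrk x by lia.
have Ei : i = (wrk p).+1 by lia.
rewrite Ei !wins_split wins_cat ifF; last lia.
rewrite wins_cat ifT; last lia.
by do 3 f_equal; lia.
Qed.

Lemma W3 i j x y z : 0 < i -> i <= wrk x -> i + wrk y <= j -> wrk z = 0 ->
  wins i (wins (j - wrk y).+1 x z) y = wins j (wins i x y) z.
Proof.
move=> i0 ix jy z0; have /wsplit [p [q [-> Hp]]] : 0 < i <= wrk x by lia.
have Ei : i = (wrk p).+1 by lia.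
have E1 : wins (j - wrk y).+1 (p ++ None :: q) z = p ++ None :: wins (j - wrk y - wrk p) q z.
  rewrite wins_cat ifF; last lia.
  have -> : (j - wrk y).+1 - wrk p = (j - wrk y - wrk p).+1 by lia.
  case E: (j - wrk y - wrk p) => [|m]; first lia. done.
rewrite E1 Ei !wins_split wins_cat ifF; last lia.
rewrite wins_cat ifF; last lia.
by have -> : j - wrk p - wrk y = j - wrk y - wrk p by lia.
Qed.
End Words.

Section MCs.
Variables (S : eqType) (N : Type) (rkN : N -> nat).
Local Notation mc := (mc S N).
Local Notation rk := (mrk rkN).
Local Notation wf := (mwf rkN).

Fixpoint chainb (t : mc) : bool :=
  match t with
  | MNt _ => true | MVar _ => true
  | MIns _ c b => chainb c && (rk b == 0)
  | _ => false end.

Fixpoint push (j : nat) (a b : mc) {struct a} : mc :=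
  match a with
  | MOne => b
  | MCat a1 a2 => if j <= rk a1 then MCat (push j a1 b) a2
                  else MCat a1 (push (j - rk a1) a2 b)
  | MIns i a1 a2 =>
      if chainb a then MIns j a b
      else if j < i then MIns i.-1 (push j a1 b) a2
      else if j < i + rk a2 then
        (if rk a2 == 1 then push i a1 (push (j - i).+1 a2 b)
         else MIns i a1 (push (j - i).+1 a2 b))
      else MIns i (push (j - rk a2).+1 a1 b) a2
  | _ => MIns j a b
  end.

Fixpoint norm (t : mc) : mc :=
  match t with
  | MCat a b => MCat (norm a) (norm b)
  | MIns j a b => if rk (norm b) == 0 then push j (norm a) (norm b)
                  else MIns j (norm a) (norm b)
  | t => t end.

Fixpoint NF (t : mc) : Prop :=
  match t with
  | MCat a b => NF a /\ NF b
  | MIns _ a b => NF a /\ NF b /\ (0 < rk b \/ chainb a)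
  | _ => True end.

Lemma push_rk j a b : wf a -> 0 < j <= rk a -> rk b = 0 -> rk (push j a b) = (rk a).-1.
Proof.
elim: a j b => [A|x|w||a1 IH1 a2 IH2|i a1 IH1 a2 IH2] j b /=; try lia.
- move=> [W1 W2] Hj b0; case: ifP => H.
  + rewrite /= IH1 //; lia.
  + rewrite /= IH2 //; lia.
- move=> [i0 [ia [W1 W2]]] Hj b0.
  case: ifP => Hc /=; first lia.
  case: ifP => H1 /=; first (rewrite IH1 //; lia).
  case: ifP => H2 /=; last (rewrite IH1 //; lia).
  case: ifP => H3 /=.
  + rewrite IH1 //; try lia; rewrite IH2 //; lia.
  + rewrite IH2 //; lia.
Qed.

Lemma push_wf j a b : wf a -> wf b -> 0 < j <= rk a -> rk b = 0 -> wf (push j a b).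
Proof.
elim: a j b => [A|x|w||a1 IH1 a2 IH2|i a1 IH1 a2 IH2] j b /=; try lia.
- move=> Wb Hj b0; repeat split => //; lia.
- move=> Wb Hj b0; repeat split => //; lia.
- by move=> _ Wb.
- move=> [W1 W2] Wb Hj b0; case: ifP => H /=.
  + split => //; apply: IH1 => //; lia.
  + split => //; apply: IH2 => //; lia.
- move=> [i0 [ia [W1 W2]]] Wb Hj b0.
  case: ifP => Hc /=; first by repeat split => //; lia.
  case: ifP => H1 /=.
    rewrite push_rk //; last lia.
    repeat split => //; try lia. apply: IH1 => //; lia.
  case: ifP => H2 /=.
    case: ifP => H3 /=.
      apply: IH1 => //; last (rewrite push_rk //; lia); first (apply: IH2 => //; lia). lia.
    repeat split => //; try lia. apply: IH2 => //; lia.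
  rewrite push_rk //; last lia.
  repeat split => //; try lia. apply: IH1 => //; lia.
Qed.

Lemma push_NF j a b : wf a -> NF a -> NF b -> 0 < j <= rk a -> rk b = 0 -> NF (push j a b).
Proof.
elim: a j b => [A|x|w||a1 IH1 a2 IH2|i a1 IH1 a2 IH2] j b /=; try lia.
- by move=> _ _ Nb; repeat split => //; right.
- by move=> _ _ Nb; repeat split => //; right.
- by [].
- move=> [W1 W2] [N1 N2] Nb Hj b0; case: ifP => H /=.
  + split => //; apply: IH1 => //; lia.
  + split => //; apply: IH2 => //; lia.
- move=> [i0 [ia [W1 W2]]] [N1 [N2 Nc]] Nb Hj b0.
  case: ifP => Hc /=; first by repeat split => //; right.
  have r2 : 0 < rk a2.
    case: Nc => // c1; move: Hc; rewrite c1 /=; lia.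
  case: ifP => H1 /=.
    repeat split => //; [apply: IH1 => //; lia | by left].
  case: ifP => H2 /=.
    case: ifP => H3 /=.
      apply: IH1 => //; [apply: IH2 => //; lia | lia | rewrite push_rk //; lia].
    repeat split => //; [apply: IH2 => //; lia | left; rewrite push_rk //; lia].
  repeat split => //; [apply: IH1 => //; lia | by left].
Qed.

Lemma chain_rk k a : chainb a -> leaves_lt rkN k a -> rk a < k.
Proof.
elim: a => //= [i a1 IH1 a2 _] /andP [c1 /eqP r2] [L1 _].
have := IH1 c1 L1; lia.
Qed.

Lemma NF_correct k t : wf t -> NF t -> leaves_lt rkN k t -> rk t <= k -> mcorrect rkN k t.
Proof.
elim: t => [A|x|w||a IHa b IHb|j a IHa b IHb] /=.
- by move=> _ _ _ ->.
- by move=> _ _ _ ->.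
- by move=> _ _ _ ->.
- by move=> _ _ _ ->.
- move=> [Wa Wb] [Na Nb] [La Lb] H; repeat split => //; [apply: IHa|apply: IHb] => //; lia.
- move=> [j0 [ja [Wa Wb]]] [Na [Nb Nc]] [La Lb] H; repeat split => //; [apply: IHa|apply: IHb] => //; try lia.
  case: Nc => [|c]; first lia.
  have := chain_rk c La; lia.
Qed.

Lemma push_leaves k j a b : leaves_lt rkN k a -> leaves_lt rkN k b -> leaves_lt rkN k (push j a b).
Proof.
elim: a j b => [A|x|w||a1 IH1 a2 IH2|i a1 IH1 a2 IH2] j b //=.
- move=> [L1 L2] Lb; case: ifP => _ /=; split => //; auto.
- move=> [L1 L2] Lb; case: ifP => _ //=.
  case: ifP => _ /=; first by split => //; auto.
  case: ifP => _ /=; last by split => //; auto.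
  case: ifP => _ /=; first by auto.
  by split => //; auto.
Qed.

Lemma push_ground j a b : mground a -> mground b -> mground (push j a b).
Proof.
elim: a j b => [A|x|w||a1 IH1 a2 IH2|i a1 IH1 a2 IH2] j b //=.
- move=> [L1 L2] Lb; case: ifP => _ /=; split => //; auto.
- move=> [L1 L2] Lb; case: ifP => _ //=.
  case: ifP => _ /=; first by split => //; auto.
  case: ifP => _ /=; last by split => //; auto.
  case: ifP => _ /=; first by auto.
  by split => //; auto.
Qed.

Section Sem.
Variable mu : var -> word S -> Prop.
Hypothesis Hmu : valuation_ok mu.
Local Notation E := (meval mu).

Lemma sem_rk t w : wf t -> E t w -> wrk w = rk t.
Proof.
elim: t w => [A|x|s||a IHa b IHb|j a IHa b IHb] w //=.
- by move=> _ /Hmu.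
- by move=> _ ->; rewrite wrk_map.
- by move=> _ ->.
- by move=> [Wa Wb] [v [z [Hv [Hz ->]]]]; rewrite wrk_cat (IHa v) // (IHb z).
- move=> [j0 [ja [Wa Wb]]] [v [z [Hv [Hz ->]]]].
  rewrite wrk_wins (IHa v) // ?(IHb z) //; lia.
Qed.

Lemma push_sem j a b : wf a -> 0 < j <= rk a -> (forall w, E b w -> wrk w = 0) ->
  forall u, E (push j a b) u <-> E (MIns j a b) u.
Proof.
elim: a j b => [A|x|s||a1 IH1 a2 IH2|i a1 IH1 a2 IH2] j b //= Wa Hj Hb u.
- have -> : j = 1 by lia.
  split; first by move=> Hu; exists [:: None], u; rewrite /= cats0.
  by move=> [v [w [-> [Hw ->]]]]; rewrite /= cats0.
- case: Wa => W1 W2; case: ifP => H /=.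
  + have R : 0 < j <= rk a1 by lia.
    have E1 := IH1 j b W1 R Hb.
    split.
    * move=> [v [y [/E1 [x [z [Hx [Hz ->]]]] [Hy ->]]]].
      exists (x ++ y), z; split; first by exists x, y.
      by split => //; rewrite wins_cat (sem_rk W1 Hx) H.
    * move=> [v [z [[x [y [Hx [Hy ->]]]] [Hz ->]]]].
      exists (wins j x z), y; split; last by split => //; rewrite wins_cat (sem_rk W1 Hx) H.
      apply/E1. by exists x, z.
  + have R : 0 < j - rk a1 <= rk a2 by lia.
    have E2 := IH2 _ b W2 R Hb.
    split.
    * move=> [x [v [Hx [/E2 [y [z [Hy [Hz ->]]]] ->]]]].
      exists (x ++ y), z; split; first by exists x, y.
      by split => //; rewrite wins_cat (sem_rk W1 Hx) H.
    * move=> [v [z [[x [y [Hx [Hy ->]]]] [Hz ->]]]].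
      exists x, (wins (j - rk a1) y z); split => //; split; last by rewrite wins_cat (sem_rk W1 Hx) H.
      apply/E2. by exists y, z.
- case: Wa => [i0 [ia [Wa1 Wa2]]].
  case: ifP => Hc; first by [].
  case: ifP => H1.
    have R : 0 < j <= rk a1 by lia.
    have E1 := IH1 j b Wa1 R Hb.
    split.
    * move=> [v [y [/E1 [x [z [Hx [Hz ->]]]] [Hy ->]]]].
      exists (wins i x y), z; split; first by exists x, y.
      by split => //; rewrite W1 // ?(sem_rk Wa1 Hx) ?Hb //; lia.
    * move=> [v [z [[x [y [Hx [Hy ->]]]] [Hz ->]]]].
      exists (wins j x z), y; split; first by apply/E1; exists x, z.
      by split => //; rewrite W1 // ?(sem_rk Wa1 Hx) ?Hb //; lia.
  case: ifP => H2.
    have R : 0 < (j - i).+1 <= rk a2 by lia.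
    have E2 := IH2 _ b Wa2 R Hb.
    have key : E (MIns i a1 (push (j - i).+1 a2 b)) u <->
       (exists v w, (exists v' w', E a1 v' /\ E a2 w' /\ v = wins i v' w') /\ E b w /\ u = wins j v w).
      split.
      * move=> [x [c [Hx [/E2 [y [z [Hy [Hz ->]]]] ->]]]].
        exists (wins i x y), z; split; first by exists x, y.
        by split => //; rewrite W2 // ?(sem_rk Wa1 Hx) ?(sem_rk Wa2 Hy) ?Hb //; lia.
      * move=> [v [z [[x [y [Hx [Hy ->]]]] [Hz ->]]]].
        exists x, (wins (j - i).+1 y z); split => //; split; first by apply/E2; exists y, z.
        by rewrite W2 // ?(sem_rk Wa1 Hx) ?(sem_rk Wa2 Hy) ?Hb //; lia.
    case: ifP => H3; last exact: key.
    rewrite -key.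
    have R1 : 0 < i <= rk a1 by lia.
    have Hb' : forall w, E (push (j - i).+1 a2 b) w -> wrk w = 0.
      move=> w /E2 [y [z [Hy [Hz ->]]]].
      rewrite wrk_wins (sem_rk Wa2 Hy) ?Hb //; lia.
    exact: (IH1 i _ Wa1 R1 Hb').
  have R : 0 < (j - rk a2).+1 <= rk a1 by lia.
  have E1 := IH1 _ b Wa1 R Hb.
  split.
  * move=> [v [y [/E1 [x [z [Hx [Hz ->]]]] [Hy ->]]]].
    exists (wins i x y), z; split; first by exists x, y.
    by split => //; rewrite -(sem_rk Wa2 Hy) W3 // ?(sem_rk Wa1 Hx) ?(sem_rk Wa2 Hy) ?Hb //; lia.
  * move=> [v [z [[x [y [Hx [Hy ->]]]] [Hz ->]]]].
    exists (wins (j - rk a2).+1 x z), y; split; first by apply/E1; exists x, z.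
    by split => //; rewrite -(sem_rk Wa2 Hy) W3 // ?(sem_rk Wa1 Hx) ?(sem_rk Wa2 Hy) ?Hb //; lia.
Qed.
End Sem.

Lemma norm_rk_wf t : wf t -> rk (norm t) = rk t /\ wf (norm t).
Proof.
elim: t => //= [a IHa b IHb|j a IHa b IHb].
- by move=> [/IHa [-> ?] /IHb [-> ?]].
- move=> [j0 [ja [/IHa [Ra Wa] /IHb [Rb Wb]]]].
  case: ifP => /eqP H.
  + split; [rewrite push_rk //; try lia | apply: push_wf => //; lia].
  + by rewrite /= Ra Rb; repeat split => //; lia.
Qed.

Lemma norm_NF t : wf t -> NF (norm t).
Proof.
elim: t => //= [a IHa b IHb|j a IHa b IHb].
- by move=> [/IHa ? /IHb ?].
- move=> [j0 [ja [Wa Wb]]].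
  have [Ra Wa'] := norm_rk_wf Wa; have [Rb Wb'] := norm_rk_wf Wb.
  case: ifP => /eqP H.
  + apply: push_NF => //; auto. lia.
  + repeat split; auto. left; lia.
Qed.

Lemma norm_leaves k t : leaves_lt rkN k t -> leaves_lt rkN k (norm t).
Proof.
elim: t => //= [a IHa b IHb|j a IHa b IHb] [La Lb].
- by split; auto.
- by case: ifP => _; [apply: push_leaves|split]; auto.
Qed.

Lemma norm_ground t : mground t -> mground (norm t).
Proof.
elim: t => //= [a IHa b IHb|j a IHa b IHb] [La Lb].
- by split; auto.
- by case: ifP => _; [apply: push_ground|split]; auto.
Qed.

Lemma norm_sem mu : valuation_ok mu -> forall t, wf t -> forall u, meval mu (norm t) u <-> meval mu t u.
Proof.
move=> Hmu; elim => //= [a IHa b IHb|j a IHa b IHb].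
- move=> [Wa Wb] u; split.
  + by move=> [v [w [/(IHa Wa) Hv [/(IHb Wb) Hw ->]]]]; exists v, w.
  + by move=> [v [w [/(IHa Wa) Hv [/(IHb Wb) Hw ->]]]]; exists v, w.
- move=> [j0 [ja [Wa Wb]]] u.
  have [Ra Wa'] := norm_rk_wf Wa; have [Rb Wb'] := norm_rk_wf Wb.
  have key : meval mu (MIns j (norm a) (norm b)) u <-> meval mu (MIns j a b) u.
    split.
    + by move=> [v [w [/(IHa Wa) Hv [/(IHb Wb) Hw ->]]]]; exists v, w.
    + by move=> [v [w [/(IHa Wa) Hv [/(IHb Wb) Hw ->]]]]; exists v, w.
  case: ifP => /eqP H; last exact: key.
  apply: (iff_trans _ key); apply: push_sem => //; first lia.
  by move=> w Hw; rewrite (sem_rk Hmu Wb' Hw).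
Qed.

Section Subst.
Variable sg : var -> option N.
Hypothesis Hsg : forall x A, sg x = Some A -> x.1 = rkN A.

Lemma rk_subst (t : mc) : rk (msubst sg t) = rk t.
Proof.
elim: t => //= [x|a -> b ->|j a -> b ->] //.
by case E: (sg x) => [A|] //=; rewrite (Hsg E).
Qed.

Lemma chainb_subst (t : mc) : chainb (msubst sg t) = chainb t.
Proof.
elim: t => //= [x|j a -> b _]; first by case: (sg x).
by rewrite rk_subst.
Qed.

Lemma push_subst j (a b : mc) : msubst sg (push j a b) = push j (msubst sg a) (msubst sg b).
Proof.
elim: a j b => [A|x|s||a1 IH1 a2 IH2|i a1 IH1 a2 IH2] j b //=.
- by case: (sg x).
- by rewrite rk_subst; case: ifP => _ /=; rewrite ?IH1 ?IH2.
- rewrite chainb_subst rk_subst; case: ifP => _ //.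
  case: ifP => _ /=; first by rewrite IH1.
  case: ifP => _ /=; last by rewrite IH1.
  by case: ifP => _ /=; rewrite ?IH1 ?IH2.
Qed.

Lemma norm_subst (t : mc) : msubst sg (norm t) = norm (msubst sg t).
Proof.
elim: t => //= [x|a IHa b IHb|j a IHa b IHb].
- by case: (sg x).
- by rewrite IHa IHb.
- rewrite -IHb rk_subst; case: ifP => _; last by rewrite /= IHa IHb.
  by rewrite push_subst IHa IHb.
Qed.
End Subst.

Fixpoint ntl (t : mc) : seq (option N) :=
  match t with
  | MNt A => [:: Some A]
  | MCat a b => ntl a ++ ntl b
  | MIns _ a b => ntl a ++ ntl b
  | _ => [::] end.

Fixpoint gr (t : mc) (n : nat) : mc :=
  match t with
  | MNt A => MVar (rkN A, n)
  | MCat a b => MCat (gr a n) (gr b (n + size (ntl a)))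
  | MIns j a b => MIns j (gr a n) (gr b (n + size (ntl a)))
  | t => t end.

Fixpoint maxv (t : mc) : nat :=
  match t with
  | MVar x => x.2
  | MCat a b => maxn (maxv a) (maxv b)
  | MIns _ a b => maxn (maxv a) (maxv b)
  | _ => 0 end.

Lemma gr_rk (t : mc) n : rk (gr t n) = rk t.
Proof. by elim: t n => //= [a IHa b IHb|j a IHa b IHb] n; rewrite IHa IHb. Qed.

Lemma gr_wf (t : mc) n : wf t -> wf (gr t n).
Proof.
elim: t n => //= [a IHa b IHb|j a IHa b IHb] n.
- by move=> [? ?]; split; auto.
- by rewrite gr_rk => -[? [? [? ?]]]; repeat split; auto.
Qed.

Lemma gr_ground (t : mc) n : mground (gr t n).
Proof. by elim: t n => //= [a IHa b IHb|j a IHa b IHb] n; split. Qed.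

Lemma gr_subst (sg : var -> option N) (t : mc) n :
  (forall p A, nth None (ntl t) p = Some A -> sg (rkN A, n + p) = Some A) ->
  (forall x, x.2 <= maxv t -> sg x = None) ->
  msubst sg (gr t n) = t.
Proof.
elim: t n => [A|x|s||a IHa b IHb|j a IHa b IHb] n //= H1 H2.
- by rewrite -(addn0 n) (H1 0 A).
- by rewrite H2.
- rewrite IHa ?IHb //.
  + move=> p A Hp; rewrite -addnA; apply: H1; rewrite nth_cat ifF; last lia.
    by rewrite addKn.
  + by move=> x Hx; apply: H2; rewrite leq_max Hx orbT.
  + move=> p A Hp; apply: H1; rewrite nth_cat.
    case: ifP => // /negbT; rewrite -leqNgt => Hs.
    by rewrite nth_default in Hp.
  + by move=> x Hx; apply: H2; rewrite leq_max Hx.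
- rewrite IHa ?IHb //.
  + move=> p A Hp; rewrite -addnA; apply: H1; rewrite nth_cat ifF; last lia.
    by rewrite addKn.
  + by move=> x Hx; apply: H2; rewrite leq_max Hx orbT.
  + move=> p A Hp; apply: H1; rewrite nth_cat.
    case: ifP => // /negbT; rewrite -leqNgt => Hs.
    by rewrite nth_default in Hp.
  + by move=> x Hx; apply: H2; rewrite leq_max Hx.
Qed.
End MCs.

Theorem lemma2 (S : finType) (N : Type) (rkN : N -> nat) (k : nat) (C : mc S N) :
  mwf rkN C -> messential rkN k C ->
  exists C' : mc S N, mwf rkN C' /\ mcorrect rkN k C' /\ mequiv rkN C C'.
Proof.
move=> W [Hk L].
pose m := (maxv C).+1.
pose sg := fun x : var => if m <= x.2 then
   (match nth None (ntl C) (x.2 - m) with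
    | Some A => if x.1 == rkN A then Some A else None | None => None end) else None.
have Hsg : forall x A, sg x = Some A -> x.1 = rkN A.
  move=> x A; rewrite /sg; case: ifP => // _.
  case: (nth None (ntl C) (x.2 - m)) => // B; case: ifP => // /eqP -> [->] //.
have [R Wn] := norm_rk_wf W.
exists (norm rkN C); split => //; split.
  apply: NF_correct => //; [exact: norm_NF | exact: norm_leaves | by rewrite R; apply: ltnW].
have G : msubst sg (gr rkN C m) = C.
  apply: gr_subst.
  - move=> p A Hp; rewrite /sg leq_addr addKn Hp eqxx //.
  - by move=> x Hx; rewrite /sg ifF //; apply/negbTE; rewrite -ltnNge ltnS.
exists sg, (gr rkN C m), (norm rkN (gr rkN C m)).
have Wg := gr_wf m W.
split; first exact: Hsg.
split; first exact: gr_ground.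
split; first exact: norm_ground (gr_ground _ _ _).
split; first exact: Wg.
split; first exact: (norm_rk_wf Wg).2.
split; first by move=> nu Hnu u; symmetry; apply: norm_sem.
split; first by rewrite G.
by rewrite norm_subst // G.
Qed.
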